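(* Let $H$ be a complex reductive group, let $V$ be a finite-dimensional $H$-module and let $v\in V$. The following are equivalent: (1) the span of $Hv$ is $V$; (2) there is no nontrivial one-parameter subgroup of $S:=\operatorname{GL}(V)^H$ which fixes $v$; (3) $v$ is generic.
   Context: Let $V=\bigoplus_{i=1}^k n_iV_i$ be the isotypic decomposition, $V_i$ pairwise non-isomorphic irreducible $H$-modules. Then $\operatorname{GL}(V)^H$ (the $H$-equivariant invertible linear maps) is $\operatorname{GL}(n_1)\times\dots\times\operatorname{GL}(n_k)$. Write $v=(v_{ij})$ with $v_{ij}$ in the $j$th copy of $V_i$ (identified with $V_i$), $j=1,\dots,n_i$. Let $U_i\subset V_i$ be the span of $v_{i1},\dots,v_{in_i}$. The vector $v$ is called generic if $\dim U_i=n_i$ for all $i$. *)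

(* Defs.v *)
From HB Require Import structures.
From mathcomp Require Import all_boot all_order all_algebra.
From mathcomp Require Import reals complex.
Set Implicit Arguments. Unset Strict Implicit. Unset Printing Implicit Defensive.
Import Order.TTheory GRing.Theory Num.Theory.
Local Open Scope ring_scope.

Section Defs.
Variables (F : fieldType) (n : nat).

(* V = F^n as row vectors; a linear group G (the image of H in GL(V)),
   acting on the right: v |-> v *m g. *)
Definition mat_group (G : 'M[F]_n -> Prop) : Prop :=
  [/\ G 1%:M,
      (forall g h, G g -> G h -> G (g *m h)) &
      (forall g, G g -> g \in unitmx /\ G (invmx g))].

Definition invariant (G : 'M[F]_n -> Prop) (U : 'M[F]_n) : Prop :=
  forall g, G g -> stablemx U g.

(* every submodule has an invariant complement (H reductive) *)
Definition compl_reducible (G : 'M[F]_n -> Prop) : Prop :=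
  forall U : 'M[F]_n, invariant G U ->
    exists W : 'M[F]_n, [/\ invariant G W, mxdirect (U + W) & row_full (U + W)].

Definition irreducible_sub (G : 'M[F]_n -> Prop) (M : 'M[F]_n) : Prop :=
  [/\ invariant G M, (0 < \rank M)%N &
      forall U : 'M[F]_n, invariant G U -> (U <= M)%MS ->
        \rank U = 0%N \/ (U == M)%MS].

Definition giso (G : 'M[F]_n -> Prop) (M M' f : 'M[F]_n) : Prop :=
  [/\ (M *m f :=: M')%MS, \rank (M *m f) = \rank M &
      forall g, G g -> M *m g *m f = M *m f *m g].

Definition isomorphic (G : 'M[F]_n -> Prop) (M M' : 'M[F]_n) : Prop :=
  exists f, giso G M M' f.

(* Isotypic decomposition V = (+)_{i<k} (+)_{j < mult i} comp i j, where
   comp i j is the j-th copy of the irreducible V_i (model i, an irreducible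
   submodule of V), identified with V_i via the H-isomorphism ident i j;
   the V_i are pairwise non-isomorphic. *)
Definition isotypic_decomposition (G : 'M[F]_n -> Prop) (k : nat)
    (mult : 'I_k -> nat) (comp : forall i, 'I_(mult i) -> 'M[F]_n)
    (model : 'I_k -> 'M[F]_n) (ident : forall i, 'I_(mult i) -> 'M[F]_n) : Prop :=
  (forall i, (0 < mult i)%N) /\
  (forall i, irreducible_sub G (model i)) /\
  (forall i j, irreducible_sub G (comp i j)) /\
  (forall i j, giso G (comp i j) (model i) (ident i j)) /\
  (forall i i', i != i' -> ~ isomorphic G (model i) (model i')) /\
  (\sum_(i < k) \sum_(j < mult i) \rank (comp i j))%N = n /\
  row_full (\sum_(i < k) \sum_(j < mult i) comp i j)%MS.

(* v is generic: writing v = sum v_ij (v_ij in the j-th copy of V_i) and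
   identifying v_ij with an element of V_i, the span U_i of the v_ij
   (j < n_i) has dimension n_i. *)
Definition generic (k : nat) (mult : 'I_k -> nat)
    (comp : forall i, 'I_(mult i) -> 'M[F]_n)
    (ident : forall i, 'I_(mult i) -> 'M[F]_n) (v : 'rV[F]_n) : Prop :=
  forall w : forall i, 'I_(mult i) -> 'rV[F]_n,
    (forall i j, (w i j <= comp i j)%MS) ->
    v = \sum_(i < k) \sum_(j < mult i) w i j ->
    forall i, \rank (\matrix_(j < mult i) (w i j *m ident i j)) = mult i.

Definition spans (G : 'M[F]_n -> Prop) (v : 'rV[F]_n) : Prop :=
  forall U : 'M[F]_n, (forall g, G g -> (v *m g <= U)%MS) -> row_full U.

(* one-parameter subgroup of GL(V): a morphism of algebraic groups
   F^* -> GL(V), i.e. a group homomorphism whose matrix entries are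
   Laurent polynomials in t (values at t = 0 are irrelevant). *)
Definition laurent_mx (lam : F -> 'M[F]_n) : Prop :=
  exists (N : nat) (P : 'M[{poly F}]_n),
    forall t, t != 0 -> lam t = t ^- N *: map_mx (fun p => p.[t]) P.

Definition one_param_subgroup (lam : F -> 'M[F]_n) : Prop :=
  [/\ laurent_mx lam, lam 1 = 1%:M &
      forall s t, s != 0 -> t != 0 -> lam (s * t) = lam s *m lam t].

Definition in_commutant (G : 'M[F]_n -> Prop) (lam : F -> 'M[F]_n) : Prop :=
  forall t, t != 0 -> forall g, G g -> lam t *m g = g *m lam t.

Definition nontrivial_1ps (lam : F -> 'M[F]_n) : Prop :=
  exists t, t != 0 /\ lam t != 1%:M.

Definition fixes (lam : F -> 'M[F]_n) (v : 'rV[F]_n) : Prop :=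
  forall t, t != 0 -> v *m lam t = v.

Definition no_fixing_1ps (G : 'M[F]_n -> Prop) (v : 'rV[F]_n) : Prop :=
  ~ exists lam : F -> 'M[F]_n,
      [/\ one_param_subgroup lam, in_commutant G lam, nontrivial_1ps lam
        & fixes lam v].

End Defs.

(* Main.v *)
Require Import Defs.
From HB Require Import structures.
From mathcomp Require Import all_boot all_order all_algebra.
From mathcomp Require Import reals complex zify.
From Stdlib Require Import Classical.
Require Import Defs.
Import GRing.Theory Num.Theory.
Local Open Scope ring_scope.
Set Implicit Arguments. Unset Strict Implicit.

Section Gen.
Variables (F : fieldType) (n : nat) (G : 'M[F]_n -> Prop).

Definition commutes_on (A f : 'M[F]_n) :=
  forall g, G g -> A *m g *m f = A *m f *m g.

Lemma rows_eq m (X : 'M[F]_(m,n)) (f h : 'M[F]_n) :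
  (forall x : 'rV_n, (x <= X)%MS -> x *m f = x *m h) -> X *m f = X *m h.
Proof. move=> H; apply/row_matrixP => i; rewrite !row_mul; apply: H; exact: row_sub. Qed.

Lemma sub_eq m p (X : 'M[F]_(m,n)) (Y : 'M[F]_(p,n)) (f h : 'M[F]_n) :
  X *m f = X *m h -> (Y <= X)%MS -> Y *m f = Y *m h.
Proof. by move=> E /submxP[D ->]; rewrite -!mulmxA E. Qed.

Lemma mx_ext (A B : 'M[F]_n) : (forall x : 'rV_n, x *m A = x *m B) -> A = B.
Proof. by move=> H; rewrite -[A]mul1mx -[B]mul1mx; apply: rows_eq => x _; exact: H. Qed.

Lemma inv_sub (X : 'M[F]_n) m (Y : 'M[F]_(m,n)) g :
  invariant G X -> G g -> (Y <= X)%MS -> (Y *m g <= X)%MS.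
Proof. by move=> HX Gg sYX; apply: submx_trans (submxMr g sYX) (HX g Gg). Qed.

Lemma proj_val (A B : 'M[F]_n) (a b : 'rV[F]_n) :
  (A :&: B = 0)%MS -> (a <= A)%MS -> (b <= B)%MS -> (a + b) *m proj_mx A B = a.
Proof. by move=> d sa sb; rewrite mulmxDl (proj_mx_id d sa) (proj_mx_0 d sb) addr0. Qed.

Lemma full_dec (A B : 'M[F]_n) (x : 'rV[F]_n) : row_full (A + B)%MS ->
  exists a b, [/\ (a <= A)%MS, (b <= B)%MS & x = a + b].
Proof.
move=> f; have: (x <= A + B)%MS by exact: submx_full.
by case/sub_addsmxP=> u ->; exists (u.1 *m A), (u.2 *m B); rewrite !submxMl.
Qed.

Lemma proj_comm (A B : 'M[F]_n) g : invariant G A -> invariant G B ->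
  (A :&: B = 0)%MS -> row_full (A + B)%MS -> G g ->
  g *m proj_mx A B = proj_mx A B *m g.
Proof.
move=> iA iB d f Gg; apply: mx_ext => x.
have [a [b [sa sb ->]]] := full_dec x f.
rewrite mulmxA mulmxDl proj_val ?(inv_sub iA) ?(inv_sub iB) //.
by rewrite mulmxA proj_val.
Qed.

Lemma irr_inv (M : 'M[F]_n) : irreducible_sub G M -> invariant G M.
Proof. by case. Qed.

Lemma comm_sub (A B f : 'M[F]_n) : commutes_on A f -> (B <= A)%MS -> commutes_on B f.
Proof.
move=> c s g Gg; rewrite -!mulmxA; apply: sub_eq s.
by rewrite !mulmxA c.
Qed.

Lemma comm_glob (A T : 'M[F]_n) : (forall g, G g -> g *m T = T *m g) -> commutes_on A T.
Proof. by move=> H g Gg; rewrite -!mulmxA H. Qed.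

Lemma comm_comp (A f h : 'M[F]_n) :
  commutes_on A f -> commutes_on (A *m f) h -> commutes_on A (f *m h).
Proof. by move=> c1 c2 g Gg; rewrite !mulmxA c1 // c2. Qed.

Lemma iso_lemma (M M' f : 'M[F]_n) : irreducible_sub G M -> irreducible_sub G M' ->
  commutes_on M f -> (M *m f <= M')%MS -> M *m f != 0 -> giso G M M' f.
Proof.
move=> [iM rM irrM] [iM' rM' irrM'] c sM' nz.
have iK : invariant G (M :&: kermx f)%MS.
  move=> g Gg; rewrite sub_capmx (inv_sub iM Gg (capmxSl _ _)) /=.
  apply/sub_kermxP.
  have cK := comm_sub c (capmxSl M (kermx f)).
  by rewrite cK // (sub_kermxP (capmxSr _ _)) mul0mx.
have rk : \rank (M *m f) = \rank M.
  case: (irrM _ iK (capmxSl _ _)) => [r0|/eqmxP e].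
    by have := mxrank_mul_ker M f; rewrite r0 addn0.
  have : (M <= kermx f)%MS by rewrite -e capmxSr.
  by move/sub_kermxP=> z; rewrite z eqxx in nz.
split; [|exact: rk|by move=> g Gg; exact: c].
have iMf : invariant G (M *m f).
  by move=> g Gg; rewrite -c //; apply: submxMr; exact: iM.
case: (irrM' _ iMf sM') => [/eqP|/eqmxP //].
by rewrite mxrank_eq0 (negbTE nz).
Qed.

Definition inviso (M f : 'M[F]_n) := pinvmx (row_base M *m f) *m row_base M.

Lemma inviso_spec (M M' f : 'M[F]_n) : invariant G M -> giso G M M' f ->
  [/\ giso G M' M (inviso M f),
      (forall x : 'rV_n, (x <= M)%MS -> x *m f *m inviso M f = x) &
      (forall y : 'rV_n, (y <= M')%MS -> y *m inviso M f *m f = y)].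
Proof.
move=> iM [e rk c].
set B := row_base M.
have eB : (B *m f :=: M')%MS := eqmx_trans (eqmxMr f (eq_row_base M)) e.
have fB : row_free (B *m f).
  by rewrite /row_free (eqmxMr f (eq_row_base M)) rk.
have P2 : forall y : 'rV_n, (y <= M')%MS -> y *m inviso M f *m f = y.
  move=> y sy; rewrite /inviso -/B mulmxA -(mulmxA _ B f) mulmxKpV //.
  by rewrite eB.
have P1 : forall x : 'rV_n, (x <= M)%MS -> x *m f *m inviso M f = x.
  move=> x; rewrite -(eq_row_base M) => /submxP[D ->].
  by rewrite /inviso -/B mulmxA -(mulmxA D B f) -(mulmxA D) mulmxVp // mulmx1.
have sub1 : (M' *m inviso M f <= M)%MS.
  by rewrite /inviso mulmxA; apply: submx_trans (submxMl _ _) _; rewrite eq_row_base.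
have eM : (M' *m inviso M f :=: M)%MS.
  apply/eqmxP/andP; split=> //.
  apply/row_subP=> i; rewrite -(P1 (row i M)) ?row_sub //.
  apply: submxMr; rewrite -e -row_mul; exact: row_sub.
split=> //; split=> //.
  by rewrite eM -rk e.
move=> g Gg; rewrite -(mulmxA M' g) -(mulmxA M' (inviso M f)); apply: rows_eq => y sy.
have sx : (y *m inviso M f <= M)%MS by rewrite -eM submxMr.
set x := y *m inviso M f in sx *.
have yE : y = x *m f by rewrite /x P2.
have yx : y *m inviso M f = x by [].
clearbody x.
have cx : x *m (g *m f) = x *m (f *m g).
  by apply: (sub_eq (X := M)) => //; rewrite !mulmxA c.
transitivity (x *m g); last by rewrite mulmxA yx.
rewrite {1}yE mulmxA -(mulmxA x f g) -cx mulmxA P1 //; exact: (inv_sub iM Gg sx).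
Qed.

Lemma giso_comp (A B C f h : 'M[F]_n) : giso G A B f -> giso G B C h -> giso G A C (f *m h).
Proof.
move=> [e1 r1 c1] [e2 r2 c2]; split.
- by rewrite mulmxA; exact: eqmx_trans (eqmxMr h e1) e2.
- by rewrite mulmxA (eqmxMr h e1) r2 -e1 r1.
- apply: comm_comp; first by move=> g Gg; exact: c1.
  move=> g Gg; rewrite -(mulmxA (A *m f) g h) -(mulmxA (A *m f) h g).
  apply: (sub_eq (X := B)); first by rewrite !mulmxA c2.
  by rewrite e1.
Qed.

End Gen.

Section Closed.
Variables (F : closedFieldType) (n : nat) (G : 'M[F]_n -> Prop).

Lemma schur (M E : 'M[F]_n) : irreducible_sub G M -> commutes_on G M E ->
  (M *m E <= M)%MS -> exists c, forall y : 'rV_n, (y <= M)%MS -> y *m E = c *: y.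
Proof.
move=> [iM rM irrM] cE sE.
set B := row_base M.
have eB : (B :=: M)%MS := eq_row_base M.
set Er := B *m E *m pinvmx B.
have ErB : Er *m B = B *m E by rewrite /Er mulmxKpV // eB (eqmxMr E eB).
have [c rc] : exists c, root (char_poly Er) c.
  by apply/closed_rootP; rewrite size_char_poly eqSS -lt0n.
move: rc; rewrite -eigenvalue_root_char => /eigenvalueP[y yE ynz].
exists c.
set K := (M :&: kermx (E - c%:M))%MS.
have xK : (y *m B <= K)%MS.
  rewrite sub_capmx; apply/andP; split.
    by apply: submx_trans (submxMl y B) _; rewrite eB.
  apply/sub_kermxP.
  by rewrite mulmxBr -mulmxA -ErB mulmxA yE mul_mx_scalar -scalemxAl subrr.
have iK : invariant G K.
  move=> g Gg; rewrite sub_capmx (inv_sub iM Gg (capmxSl _ _)) /=.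
  apply/sub_kermxP.
  have cK := comm_sub cE (capmxSl M (kermx (E - c%:M))).
  rewrite mulmxBr mul_mx_scalar cK // scalemxAl -mulmxBl -mul_mx_scalar -mulmxBr.
  by rewrite (sub_kermxP (capmxSr _ _)) mul0mx.
have yB0 : y *m B != 0.
  apply: contra ynz => /eqP z; apply/eqP; apply: (row_free_inj (row_base_free M)).
  by rewrite /= z mul0mx.
case: (irrM K iK (capmxSl _ _)) => [/eqP|/eqmxP eK].
  by rewrite mxrank_eq0 => /eqP K0; move: xK; rewrite K0 submx0 (negbTE yB0).
move=> z sz; have : (z <= K)%MS by rewrite eK.
rewrite sub_capmx => /andP[_ /sub_kermxP].
by rewrite mulmxBr mul_mx_scalar => /eqP; rewrite subr_eq0 => /eqP.
Qed.
End Closed.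

Unset Implicit Arguments.
Section Dec.
Variables (F : fieldType) (n : nat) (G : 'M[F]_n -> Prop).
Variables (k : nat) (mult : 'I_k -> nat) (comp : forall i, 'I_(mult i) -> 'M[F]_n).

Definition S := {i : 'I_k & 'I_(mult i)}.
Definition A (s : S) := comp (tag s) (tagged s).
Definition O (s : S) := (\sum_(t | predT t && (t != s)) A t)%MS.
Definition P (s : S) := proj_mx (A s) (O s).

Lemma flat_sum (R : Type) (idx : R) (op : Monoid.com_law idx)
   (X : forall i, 'I_(mult i) -> R) :
  \big[op/idx]_(i < k) \big[op/idx]_(j < mult i) X i j =
  \big[op/idx]_(s : S) X (tag s) (tagged s).
Proof. by rewrite (sig_big_dep xpredT (fun _ => xpredT)). Qed.

Lemma inv_sum (I : finType) (Q : pred I) (B : I -> 'M[F]_n) :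
  (forall i, invariant G (B i)) -> invariant G (\sum_(i | Q i) B i)%MS.
Proof.
move=> H g Gg; apply: (big_ind (fun X : 'M_n => stablemx X g)).
- by rewrite mul0mx sub0mx.
- by move=> X Y; exact: stableDmx.
- by move=> i _; exact: H.
Qed.

Section Hyp.
Variables (irr : forall i j, invariant G (comp i j))
  (rk : (\sum_(i < k) \sum_(j < mult i) \rank (comp i j))%N = n)
  (full : row_full (\sum_(i < k) \sum_(j < mult i) comp i j)%MS).

Lemma fullS : row_full (\sum_(s : S) A s)%MS.
Proof. by move: full; rewrite flat_sum. Qed.

Lemma directS : mxdirect (\sum_(s : S) A s)%MS.
Proof.
rewrite mxdirectE /=.
apply/eqP; transitivity n; first by apply/eqP; exact: fullS.
by have := rk; rewrite flat_sum => ->.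
Qed.

Lemma capO s : (A s :&: O s)%MS = 0.
Proof. by move/mxdirect_sumsP: directS; apply. Qed.

Lemma fullO s : row_full (A s + O s)%MS.
Proof. by have := fullS; rewrite (bigD1 s). Qed.

Lemma invO s : invariant G (O s).
Proof. by apply: inv_sum => t; exact: irr. Qed.

Lemma P_id s (y : 'rV_n) : (y <= A s)%MS -> y *m P s = y.
Proof. exact: proj_mx_id (capO s). Qed.

Lemma P_0 s t (y : 'rV_n) : t != s -> (y <= A t)%MS -> y *m P s = 0.
Proof.
move=> ne sy; apply: proj_mx_0 (capO s) _.
by apply: (sumsmx_sup t) => //=.
Qed.

Lemma P_sub s (y : 'rV_n) : (y *m P s <= A s)%MS.
Proof. exact: proj_mx_sub. Qed.

Lemma P_comm s g : G g -> g *m P s = P s *m g.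
Proof. by move=> Gg; apply: proj_comm (irr _ _) (invO s) (capO s) (fullO s) Gg. Qed.

Lemma P_dec (w : S -> 'rV_n) t : (forall s, (w s <= A s)%MS) ->
  (\sum_s w s) *m P t = w t.
Proof.
move=> sw; rewrite mulmx_suml (bigD1 t) //= P_id // big1 ?addr0 //.
by move=> s ne; exact: P_0 ne (sw s).
Qed.

Lemma P_sum (x : 'rV_n) : x = \sum_s x *m P s.
Proof.
have : (x <= \sum_s A s)%MS by exact: submx_full fullS.
case/sub_sumsmxP=> u ->; apply: eq_bigr => t _.
by rewrite P_dec // => s; exact: submxMl.
Qed.

End Hyp.
End Dec.

Section Dirs.
Variables (F : fieldType) (n : nat) (G : 'M[F]_n -> Prop).

Lemma span_sub (v : 'rV[F]_n) (U : 'M[F]_n) : mat_group G ->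
  (forall g, G g -> (v *m g <= U)%MS) ->
  exists X : 'M[F]_n, [/\ invariant G X, (v <= X)%MS & (X <= U)%MS].
Proof.
move=> [G1 GM _] hv.
pose K (y : 'rV[F]_n) := forall g, G g -> (y *m g <= U)%MS.
have KD : forall a b, K a -> K b -> K (a + b).
  by move=> a b ka kb g Gg; rewrite mulmxDl addmx_sub ?ka ?kb.
have KM : forall (u : 'M[F]_1) b, K b -> K (u *m b).
  by move=> u b kb g Gg; rewrite -mulmxA; apply: submx_trans (submxMl _ _) (kb g Gg).
have main : forall d (Y : 'M[F]_n), (n - \rank Y <= d)%N ->
    (forall y : 'rV_n, (y <= Y)%MS -> K y) ->
    exists X : 'M[F]_n, (forall y : 'rV_n, (y <= X)%MS -> K y) /\
                        (forall y : 'rV_n, K y -> (y <= X)%MS).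
  elim=> [|d IH] Y hd hY.
    exists Y; split=> // y _; apply: submx_full.
    by rewrite /row_full eqn_leq rank_leq_col /=; lia.
  case: (classic (forall y : 'rV_n, K y -> (y <= Y)%MS)) => [H|H].
    by exists Y.
  have [y /(_ _) Hy] : exists y : 'rV_n, ~ (K y -> (y <= Y)%MS) by apply: not_all_ex_not.
  have Ky : K y by apply: NNPP => nk; apply: Hy => /nk.
  have nyY : ~~ (y <= Y)%MS by apply/negP => yY; apply: Hy.
  apply: (IH (Y + y)%MS).
    have : (\rank Y < \rank (Y + y)%MS)%N.
      by apply: rank_ltmx; rewrite ltmxE addsmxSl /= addsmx_sub negb_and nyY orbT.
    have := rank_leq_col (Y + y)%MS; lia.
  move=> z /sub_addsmxP[u ->]; apply: KD; first by apply: hY; exact: submxMl.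
  by apply: KM.
have K0 : forall y : 'rV_n, (y <= (0 : 'M[F]_n))%MS -> K y.
  by move=> y; rewrite submx0 => /eqP -> g _; rewrite mul0mx sub0mx.
have [X [h1 h2]] := main n 0 (leq_subr _ _) K0.
exists X; split.
  - move=> g Gg; apply/row_subP=> i; rewrite row_mul; apply: h2 => h Gh.
    by rewrite -mulmxA; apply: h1 (row_sub _ _) _ (GM _ _ Gg Gh).
  - by apply: h2.
  - by apply/row_subP=> i; rewrite -[row i X]mulmx1; apply: h1 (row_sub _ _) _ G1.
Qed.

Lemma irr_exists r (Y : 'M[F]_n) : (\rank Y <= r)%N -> invariant G Y -> (0 < \rank Y)%N ->
  exists M, irreducible_sub G M /\ (M <= Y)%MS.
Proof.
elim: r Y => [|r IH] Y hr iY pY; first by lia.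
case: (classic (irreducible_sub G Y)) => [I|nI]; first by exists Y.
have : ~ (forall U : 'M[F]_n, invariant G U -> (U <= Y)%MS ->
             \rank U = 0%N \/ (U == Y)%MS) by move=> H; apply: nI; split.
move/not_all_ex_not=> [U hU].
case: (classic (invariant G U)) => iU; last by exfalso; apply: hU => /iU.
case: (classic (U <= Y)%MS) => sU; last by exfalso; apply: hU => _ /sU.
have r0 : \rank U <> 0%N by move=> e; apply: hU => _ _; left.
have nUY : ~~ (U == Y)%MS by apply/negP => e; apply: hU => _ _; right.
have lt : (\rank U < \rank Y)%N.
  by apply: rank_ltmx; move: nUY; rewrite ltmxE sU /= => ->.
have [M [iM sM]] := IH U ltac:(lia) iU ltac:(lia).
by exists M; split=> //; apply: submx_trans sM sU.
Qed.

Lemma spans_nofix (v : 'rV[F]_n) : spans G v -> no_fixing_1ps G v.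
Proof.
move=> sp [lam [_ com [t [t0 nt]] fx]].
set U := kermx (lam t - 1%:M).
have : row_full U.
  apply: sp => g Gg; apply/sub_kermxP.
  by rewrite mulmxBr mulmx1 -mulmxA -com // mulmxA fx // subrr.
rewrite /row_full mxrank_ker => /eqP e.
have : \rank (lam t - 1%:M) = 0%N by have := rank_leq_row (lam t - 1%:M); lia.
by move/eqP; rewrite mxrank_eq0 subr_eq0 (negbTE nt).
Qed.

Lemma lam_act (X W : 'M[F]_n) (a b : 'rV[F]_n) t : (X :&: W = 0)%MS ->
  (a <= X)%MS -> (b <= W)%MS ->
  (a + b) *m (proj_mx X W + t *: proj_mx W X) = a + t *: b.
Proof.
move=> d sa sb; have d' : (W :&: X = 0)%MS by rewrite capmxC.
by rewrite mulmxDr proj_val // -scalemxAr [a + b]addrC proj_val.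
Qed.

Lemma nofix_spans (v : 'rV[F]_n) : (2%:R : F) != 0 -> mat_group G -> compl_reducible G ->
  no_fixing_1ps G v -> spans G v.
Proof.
move=> two mg cr nf U hU.
case: (boolP (row_full U)) => // nU; exfalso.
have [X [iX vX XU]] := span_sub _ _ mg hU.
have nX : ~~ row_full X.
  apply: contra nU; rewrite /row_full => /eqP e.
  by rewrite eqn_leq rank_leq_col -{1}e mxrankS.
have [W [iW dXW fXW]] := cr X iX.
have d : (X :&: W = 0)%MS by apply/mxdirect_addsP.
have d' : (W :&: X = 0)%MS by rewrite capmxC.
have fWX : row_full (W + X)%MS by rewrite addsmxC.
pose lam (t : F) := proj_mx X W + t *: proj_mx W X.
have act : forall t (x : 'rV[F]_n), exists a b, [/\ (a <= X)%MS, (b <= W)%MS, x = a + b &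
            x *m lam t = a + t *: b].
  move=> t x; have [a [b [sa sb ->]]] := full_dec x fXW.
  by exists a, b; split=> //; rewrite lam_act.
apply: nf; exists lam; split.
- split.
  + exists 0%N, (\matrix_(a, b) ((proj_mx X W a b)%:P + (proj_mx W X a b)%:P * 'X)).
    move=> t _; rewrite expr0 invr1 scale1r; apply/matrixP => a b.
    by rewrite !mxE hornerD hornerM hornerC hornerX hornerC mulrC.
  + apply: mx_ext => x; have [a [b [sa sb ->]]] := full_dec x fXW.
    by rewrite lam_act // scale1r mulmx1.
  + move=> s t _ _; apply: mx_ext => x; have [a [b [sa sb ->]]] := full_dec x fXW.
    rewrite mulmxA /lam lam_act // lam_act // (lam_act _ _ a (s *: b)) ?scalemx_sub //.
    by rewrite scalerA [t * s]mulrC.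
- move=> t _ g Gg; rewrite /lam mulmxDl mulmxDr -scalemxAl -scalemxAr.
  by rewrite (proj_comm iX iW d fXW Gg) (proj_comm iW iX d' fWX Gg).
- exists 2%:R; split=> //; apply/negP => /eqP e.
  move: nX; rewrite -sub1mx; apply/negP/negPn/row_subP => i.
  have [a [b [sa sb ex]]] := full_dec (row i 1%:M) fXW.
  have : (row i 1%:M) *m lam 2%:R = row i 1%:M by rewrite e mulmx1.
  rewrite {1}ex /lam lam_act // => e2.
  have : a + 2%:R *: b = a + b by rewrite e2 ex.
  move=> /(addrI a).
  rewrite scaler_nat mulr2n -{3}[b]addr0 => /(addrI b) b0.
  by rewrite ex b0 addr0.
- move=> t _; rewrite -[v]addr0 lam_act ?sub0mx //.
  by rewrite scaler0.
Qed.

End Dirs.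
Section Main.
Variables (F : closedFieldType) (n : nat) (G : 'M[F]_n -> Prop).
Variables (k : nat) (mult : 'I_k -> nat) (comp : forall i, 'I_(mult i) -> 'M[F]_n)
  (model : 'I_k -> 'M[F]_n) (ident : forall i, 'I_(mult i) -> 'M[F]_n).

Definition tg i (j : 'I_(mult i)) : S k mult := Tagged (fun i => 'I_(mult i)) j.

Lemma tg_eq i (j j' : 'I_(mult i)) : (tg i j == tg i j') = (j == j').
Proof. by rewrite /tg eq_Tagged. Qed.

Lemma spans_generic v : isotypic_decomposition G comp model ident ->
  spans G v -> generic comp ident v.
Proof.
case=> _ [_ [irrC [gI [_ [rk full]]]]].
have irr : forall i j, invariant G (comp i j) by move=> i j; case: (irrC i j).
pose PP := P F n k mult comp.
have Pid := P_id F n k mult comp rk full.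
have P0 := P_0 F n k mult comp rk full.
have Pcomm := P_comm F n G k mult comp irr rk full.
move=> sp w sw ev i.
set Mat := \matrix_(j < mult i) (w i j *m ident i j).
apply/eqP; apply: contraT => nr.
have : kermx Mat != 0 by rewrite kermx_eq0.
case/rowV0Pn => c /sub_kermxP cM c0.
have [j0 cj0] : exists j0, c 0 j0 != 0.
  case: (pickP (fun j => c 0 j != 0)) => [j /= h|h]; first by exists j.
  case/negP: c0; apply/eqP/rowP => j; rewrite !mxE.
  by have := h j; move/negbFE/eqP.
pose T := \sum_(j < mult i) c 0 j *: (PP (tg i j) *m ident i j).
have vP : forall s, v *m PP s = w (tag s) (tagged s).
  move=> s; rewrite ev flat_sum.
  by apply: (P_dec F n k mult comp rk full (fun s => w (tag s) (tagged s))) => t; exact: sw.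
have vT : v *m T = 0.
  rewrite mulmx_sumr; transitivity (\sum_(j < mult i) c 0 j *: (w i j *m ident i j)).
    by apply: (@eq_bigr _ _ _ 'I_(mult i)) => j _; rewrite -scalemxAr mulmxA vP.
  by rewrite -[RHS]cM mulmx_sum_row; apply: eq_bigr => j _; rewrite rowK.
have Tcomm : forall g, G g -> g *m T = T *m g.
  move=> g Gg; apply: mx_ext => x; rewrite !mulmxA /T !mulmx_sumr mulmx_suml.
  apply: eq_bigr => j _; rewrite -!scalemxAr -scalemxAl; congr (_ *: _).
  rewrite /PP mulmxA -(mulmxA x g) Pcomm // (mulmxA x _ g) (mulmxA x _ (ident i j)).
  set y := x *m P F n k mult comp (tg i j).
  rewrite -(mulmxA y g) -(mulmxA y (ident i j)).
  have [_ _ cI] := gI i j.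
  apply: (sub_eq (X := comp i j)); first by rewrite !mulmxA cI.
  exact: P_sub.
have Uk : forall g, G g -> (v *m g <= kermx T)%MS.
  by move=> g Gg; apply/sub_kermxP; rewrite -mulmxA Tcomm // mulmxA vT mul0mx.
have := sp _ Uk; rewrite /row_full mxrank_ker => /eqP e.
have : \rank T = 0%N by have := rank_leq_row T; lia.
move/eqP; rewrite mxrank_eq0 => /eqP T0.
have cT : comp i j0 *m T = comp i j0 *m (c 0 j0 *: ident i j0).
  apply: rows_eq => y sy.
  rewrite mulmx_sumr (bigD1 j0) //= big1 ?addr0.
    by rewrite -!scalemxAr mulmxA Pid.
  move=> j ne; rewrite -scalemxAr mulmxA (P0 (tg i j) (tg i j0)) ?mul0mx ?scaler0 //.
  by rewrite tg_eq eq_sym.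
move: cT; rewrite T0 mulmx0 -scalemxAr => /esym/eqP; rewrite scalemx_eq0 (negbTE cj0) /=.
have [_ rI _] := gI i j0; rewrite -mxrank_eq0 rI.
by case: (irrC i j0) => _ r _; rewrite -[_ == _]negbK -lt0n r.
Qed.


Lemma core v (M T : 'M[F]_n) : isotypic_decomposition G comp model ident ->
  irreducible_sub G M -> (forall g, G g -> g *m T = T *m g) ->
  (forall x : 'rV_n, (x *m T <= M)%MS) -> v *m T = 0 -> M *m T != 0 ->
  ~ generic comp ident v.
Proof.
case=> _ [irrM [irrC [gI [noniso [rk full]]]]] iM Tc Tsub vT nz gen.
have irr : forall i j, invariant G (comp i j) by move=> i j; case: (irrC i j).
pose PP := P F n k mult comp.
have Psum := P_sum F n k mult comp rk full.
pose w i j := v *m PP (tg i j).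
have sw : forall i j, (w i j <= comp i j)%MS by move=> i j; exact: P_sub.
have ev : v = \sum_(i < k) \sum_(j < mult i) w i j.
  rewrite flat_sum {1}(Psum v); apply: eq_bigr => s _; by case: s.
have rkM := gen w sw ev.
have [s0 ns0] : exists s0, A F n k mult comp s0 *m T != 0.
  case: (pickP (fun s => A F n k mult comp s *m T != 0)) => [s h|h]; first by exists s.
  exfalso; move/eqP: nz; apply.
  have -> : M *m T = M *m 0; last by rewrite mulmx0.
  apply: rows_eq => x _; rewrite mulmx0 (Psum x) mulmx_suml big1 // => s _.
  rewrite -[RHS](mulmx0 _ (x *m P F n k mult comp s)).
  apply: (sub_eq (X := A F n k mult comp s)); last exact: P_sub.
  by rewrite mulmx0; move/negbFE/eqP: (h s).
case: s0 ns0 => i j0 ns0.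
have {}ns0 : comp i j0 *m T != 0 := ns0.
have Tco : forall X, commutes_on G X T := fun X => comm_glob X Tc.
have XTM : forall X : 'M[F]_n, (X *m T <= M)%MS.
  by move=> X; apply/row_subP => r; rewrite row_mul; exact: Tsub.
have iso0 : giso G (comp i j0) M T := iso_lemma (irrC i j0) iM (Tco _) (XTM _) ns0.
have [inv0 _ _] := inviso_spec (irr i j0) (gI i j0).
have isoA := giso_comp inv0 iso0.
set psi := inviso (model i) (inviso (comp i j0) (ident i j0) *m T).
have [isopsi _ _] := inviso_spec (irr_inv (irrM i)) isoA.
have zero : forall i' j', i' != i -> comp i' j' *m T = 0.
  move=> i' j' ne; apply/eqP; apply: contraT => nz'.
  have iso' := iso_lemma (irrC i' j') iM (Tco _) (XTM _) nz'.
  have [inv' _ _] := inviso_spec (irr i' j') (gI i' j').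
  case: (noniso i' i ne).
  by exists (inviso (comp i' j') (ident i' j') *m T *m psi); exact: giso_comp (giso_comp inv' iso') isopsi.
have sch : forall j, exists c : F, forall y : 'rV_n, (y <= model i)%MS ->
    y *m (inviso (comp i j) (ident i j) *m T *m psi) = c *: y.
  move=> j; have [invj _ _] := inviso_spec (irr i j) (gI i j).
  case: isopsi => epsi _ cpsi.
  apply: schur (irrM i) _ _.
  - apply: comm_comp; first apply: comm_comp.
    + by case: invj.
    + exact: Tco.
    + apply: (comm_sub (A := M)); first by move=> g Gg; exact: cpsi.
      by rewrite mulmxA; exact: XTM.
  - rewrite (mulmxA (model i) _ psi) (mulmxA (model i) _ T).
    apply: submx_trans (submxMr psi (XTM _)) _.
    by rewrite epsi.
have [c hc] := fin_all_exists sch.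
have key : forall j, w i j *m T *m psi = c j *: (w i j *m ident i j).
  move=> j; have [_ P1 _] := inviso_spec (irr i j) (gI i j).
  have [e _ _] := gI i j.
  rewrite -hc; last by rewrite -e submxMr.
  by rewrite (mulmxA _ _ psi) (mulmxA _ _ T) P1.
have sum0 : \sum_(j < mult i) c j *: (w i j *m ident i j) = 0.
  transitivity (v *m T *m psi); last by rewrite vT mul0mx.
  symmetry; rewrite ev -mulmxA mulmx_suml (bigD1 i) //= [X in _ + X]big1 ?addr0 => [|i' ne].
    rewrite mulmx_suml; apply: (@eq_bigr _ _ _ 'I_(mult i)) => j _; by rewrite mulmxA key.
  rewrite mulmx_suml big1 // => j _; rewrite mulmxA.
  have -> : w i' j *m T = 0.
    rewrite -[RHS](mulmx0 _ (w i' j)); apply: (sub_eq (X := comp i' j)); last exact: sw.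
    by rewrite zero // mulmx0.
  by rewrite mul0mx.
set Mat := \matrix_(j < mult i) (w i j *m ident i j).
have fr : row_free Mat by rewrite /row_free rkM.
have : (\row_j c j) *m Mat = 0 *m Mat.
  by rewrite mul0mx mulmx_sum_row -[RHS]sum0; apply: eq_bigr => j _; rewrite rowK mxE.
move/(row_free_inj fr)/rowP/(_ j0); rewrite !mxE => cj0.
have isoB := giso_comp isoA isopsi.
case: isoB => _ rB _.
have : model i *m (inviso (comp i j0) (ident i j0) *m T *m psi) = model i *m 0.
  by apply: rows_eq => y sy; rewrite hc // cj0 scale0r mulmx0.
move/(congr1 mxrank); rewrite rB mulmx0 mxrank0.
by case: (irrM i) => _ r _ e; move: r; rewrite e.
Qed.


Lemma generic_spans v : mat_group G -> compl_reducible G ->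
  isotypic_decomposition G comp model ident -> generic comp ident v -> spans G v.
Proof.
move=> mg cr D gen U hU; case: (boolP (row_full U)) => // nU; exfalso.
have [X [iX vX XU]] := span_sub _ _ _ v U mg hU.
have nX : ~~ row_full X.
  apply: contra nU; rewrite /row_full => /eqP e.
  by rewrite eqn_leq rank_leq_col -{1}e mxrankS.
have [W [iW dXW fXW]] := cr X iX.
have d : (X :&: W = 0)%MS by apply/mxdirect_addsP.
have d' : (W :&: X = 0)%MS by rewrite capmxC.
have fWX : row_full (W + X)%MS by rewrite addsmxC.
have pW : (0 < \rank W)%N.
  rewrite lt0n mxrank_eq0; apply: contra nX => /eqP W0.
  by move: fXW; rewrite /row_full W0 addsmx0.
have [M [irrMM sMW]] := irr_exists _ _ _ n W (rank_leq_col W) iW pW.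
have iM := irr_inv irrMM.
have [C [iC dMC fMC]] := cr M iM.
have dm : (M :&: C = 0)%MS by apply/mxdirect_addsP.
apply: (core v M (proj_mx W X *m proj_mx M C) D irrMM _ _ _ _ gen).
- move=> g Gg; rewrite mulmxA (proj_comm iW iX d' fWX Gg) -mulmxA.
  by rewrite (proj_comm iM iC dm fMC Gg) mulmxA.
- by move=> x; rewrite mulmxA proj_mx_sub.
- by rewrite mulmxA (proj_mx_0 d' vX) mul0mx.
- rewrite mulmxA (proj_mx_id d' sMW) (proj_mx_id dm (submx_refl M)).
  by rewrite -mxrank_eq0 -lt0n; case: irrMM.
Qed.

End Main.

Theorem proposition2p7 (R : realType) (n : nat) (G : 'M[R[i]]_n -> Prop) :
  mat_group G -> compl_reducible G ->
  forall (k : nat) (mult : 'I_k -> nat)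
         (comp : forall i, 'I_(mult i) -> 'M[R[i]]_n)
         (model : 'I_k -> 'M[R[i]]_n)
         (ident : forall i, 'I_(mult i) -> 'M[R[i]]_n),
  isotypic_decomposition G comp model ident ->
  forall v : 'rV[R[i]]_n,
    (spans G v <-> no_fixing_1ps G v) /\
    (no_fixing_1ps G v <-> generic comp ident v).
Proof.
move=> mg cr k mult comp model ident D v.
have two : (2%:R : R[i]) != 0 by rewrite pnatr_eq0.
have h1 : spans G v -> no_fixing_1ps G v := spans_nofix _ _ G v.
have h2 : no_fixing_1ps G v -> spans G v := nofix_spans _ _ G v two mg cr.
split; split => // H.
- exact: spans_generic _ _ G k mult comp model ident v D (h2 H).
- exact: h1 (generic_spans _ _ G k mult comp model ident v mg cr D H).
Qed.
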